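(* Let $G=(V,E)$ be a finite simple graph on $n$ vertices. Let $G''$ be any graph with vertex set $V$ obtained as follows: for each vertex $v\in V$, if $v$ is not isolated, choose two distinct vertices of the closed neighborhood $N(v)\cup\{v\}$ (arbitrarily) and put the edge between them into $G''$; if $v$ is isolated, put a loop on $v$ into $G''$ (an edge already present is not duplicated). Then $$\gamma(G)\le n-\alpha(G'')=\beta(G'').$$
   Context: $N(v)$ denotes the set of neighbors of $v$ in $G$. A set $S\subseteq V$ is a dominating set of $G$ if every vertex of $V$ is in $S$ or has a neighbor in $S$; $\gamma(G)$ is the minimum size of a dominating set. For a graph $H$ possibly with loops, an independent set is a set of vertices containing no two endpoints of an edge and no vertex carrying a loop, and $\alpha(H)$ is the maximum size of an independent set; a vertex cover is a set of vertices meeting every edge (so it contains every vertex carrying a loop), and $\beta(H)$ is the minimum size of a vertex cover. *)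

(* Defs.v *)
From mathcomp Require Import all_boot.
Set Implicit Arguments. Unset Strict Implicit. Unset Printing Implicit Defensive.

Section Graphs.
Variable T : finType.

Definition simple_graph (e : rel T) : Prop := symmetric e /\ irreflexive e.

Definition nbhd (e : rel T) (v : T) : {set T} := [set u | e v u].
Definition cnbhd (e : rel T) (v : T) : {set T} := v |: nbhd e v.
Definition isolated (e : rel T) (v : T) : bool := nbhd e v == set0.

Definition dominating (e : rel T) (S : {set T}) : bool :=
  [forall v, (v \in S) || [exists u in S, e v u]].
(* gamma(G); setT is always dominating, so #|T| is a harmless default *)
Definition gamma (e : rel T) : nat :=
  \big[minn/#|T|]_(S : {set T} | dominating e S) #|S|.

(* For a graph H (possibly with loops) given by a symmetric relation h,
   h x x meaning that x carries a loop. *)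
Definition independent (h : rel T) (S : {set T}) : bool :=
  [forall x in S, forall y in S, ~~ h x y].
Definition vertex_cover (h : rel T) (S : {set T}) : bool :=
  [forall x, forall y, h x y ==> (x \in S) || (y \in S)].
Definition alpha (h : rel T) : nat :=
  \max_(S : {set T} | independent h S) #|S|.
Definition beta (h : rel T) : nat :=
  \big[minn/#|T|]_(S : {set T} | vertex_cover h S) #|S|.

Definition Gpp (e : rel T) (a b : T -> T) : rel T :=
  fun x y => [exists v,
    (~~ isolated e v && (((x == a v) && (y == b v)) || ((x == b v) && (y == a v))))
    || (isolated e v && (x == v) && (y == v))].

Definition valid_choice (e : rel T) (a b : T -> T) : Prop :=
  forall v, ~~ isolated e v ->
    [/\ a v != b v, a v \in cnbhd e v & b v \in cnbhd e v].

End Graphs.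

(* Main.v *)
Require Import Defs.
From mathcomp Require Import all_boot.
From mathcomp Require Import zify.

Lemma bigmin_le_seq (I : eqType) (r : seq I) (P : pred I) (F : I -> nat) d j :
  j \in r -> P j -> \big[minn/d]_(i <- r | P i) F i <= F j.
Proof.
elim: r => [//|x r IH]; rewrite inE big_cons => /predU1P [<- ->|jr Pj].
  exact: geq_minl.
case: ifP => _; last exact: IH.
by rewrite geq_min IH ?orbT.
Qed.

Lemma bigmin_le (I : finType) (P : pred I) (F : I -> nat) d j :
  P j -> \big[minn/d]_(i | P i) F i <= F j.
Proof. by apply: bigmin_le_seq; rewrite mem_index_enum. Qed.

Lemma bigmin_ge (I : finType) (P : pred I) (F : I -> nat) d m :
  m <= d -> (forall i, P i -> m <= F i) -> m <= \big[minn/d]_(i | P i) F i.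
Proof.
move=> md H; elim/big_ind: _ => //.
  by move=> x y ??; rewrite leq_min; apply/andP.
Qed.

Theorem lemma2p3 (T : finType) (e : rel T) (a b : T -> T) :
  simple_graph e -> valid_choice e a b ->
  gamma e <= #|T| - alpha (Gpp e a b) /\
  #|T| - alpha (Gpp e a b) = beta (Gpp e a b).
Proof.
move=> [esym eirr] val.
set h := Gpp e a b.
have compl_ind : forall S, independent h S -> vertex_cover h (~: S).
  move=> S /forall_inP IS; apply/forallP => x; apply/forallP => y; apply/implyP => hxy.
  rewrite !in_setC -negb_and; apply/negP => /andP [xS yS].
  by move: (IS x xS) => /forall_inP /(_ y yS); rewrite hxy.
have compl_vc : forall S, vertex_cover h S -> independent h (~: S).
  move=> S /forallP VS; apply/forall_inP => x; rewrite in_setC => xS.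
  apply/forall_inP => y; rewrite in_setC => yS; apply/negP => hxy.
  by move: (VS x) => /forallP /(_ y); rewrite hxy /= (negbTE xS) (negbTE yS).
have vc_dom : forall S, vertex_cover h S -> dominating e S.
  move=> S /forallP VS; apply/forallP => v.
  case iv: (isolated e v).
    have : h v v by apply/existsP; exists v; rewrite iv !eqxx.
    by move: (VS v) => /forallP /(_ v) /implyP H /H; rewrite orbb => ->.
  have [_ av bv] := val v (negbT iv).
  have : h (a v) (b v) by apply/existsP; exists v; rewrite iv !eqxx.
  move: (VS (a v)) => /forallP /(_ (b v)) /implyP H /H.
  have key : forall u, u \in cnbhd e v -> u \in S -> (v \in S) || [exists u in S, e v u].
    move=> u; rewrite /cnbhd in_setU1 => /predU1P [-> -> //|].
    rewrite /nbhd inE => evu uS; apply/orP; right; apply/existsP; exists u.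
    by rewrite uS.
  by case/orP => [/(key _ av)|/(key _ bv)].
have Hbeta : #|T| - alpha h = beta h.
  apply/eqP; rewrite eqn_leq; apply/andP; split.
    apply: bigmin_ge; first exact: leq_subr.
    move=> C /compl_vc IC.
    have : #|~: C| <= alpha h by exact: (leq_bigmax_cond (P := independent h) (F := fun S : {set T} => #|S|) _ IC).
    have := cardsC C; lia.
  have [S0 IS0 ->] : exists2 S0, independent h S0 & alpha h = #|S0|.
    by exists [arg max_(S > set0 | independent h S) #|S|];
      [case: arg_maxnP => //; apply/forall_inP => x; rewrite inE |
       apply: bigmax_eq_arg; apply/forall_inP => x; rewrite inE].
  apply: leq_trans (bigmin_le _ _ _ _ _ (compl_ind _ IS0)) _.
  have := cardsC S0; lia.
split=> //; rewrite Hbeta.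
apply: bigmin_ge; first by rewrite /gamma -cardsT; apply: bigmin_le; apply/forallP => v; rewrite inE.
by move=> C /vc_dom DC; rewrite /gamma; apply: bigmin_le.
Qed.
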